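(* Let $U$ be a proper graded submodule of $M$. Then $U$ is a graded weakly $J_{gr}$-semiprime submodule of $M$ if and only if for every graded submodule $K$ of $M$, every $r_g\in h(R)$ and every $n\in\mathbb{Z}^+$ with $\{0\}\neq\langle r_g\rangle^nK\subseteq U$, we have $\langle r_g\rangle K\subseteq U+J_{gr}(M)$.
   Context: Standing conventions: $\Gamma$ is a group, $R=\bigoplus_{g\in\Gamma}R_g$ is a commutative $\Gamma$-graded ring with identity, and $M=\bigoplus_{g\in\Gamma}M_g$ is a unitary $\Gamma$-graded $R$-module. $h(R)=\bigcup_gR_g$, $h(M)=\bigcup_gM_g$ are the homogeneous elements; $r_g$, $m_h$ denote homogeneous elements. A submodule $U$ is graded if $U=\bigoplus_g(U\cap M_g)$. A graded submodule $U\neq M$ is Gr-maximal if every graded submodule $L$ with $U\subseteq L\subseteq M$ equals $U$ or $M$. $J_{gr}(M)$ is the intersection of all Gr-maximal submodules of $M$ ($=M$ if there are none). A proper graded submodule $U$ of $M$ is graded weakly $J_{gr}$-semiprime if whenever $r_g\in h(R)$, $m_h\in h(M)$, $n\in\mathbb{Z}^+$ and $0\neq r_g^nm_h\in U$, then $r_gm_h\in U+J_{gr}(M)$. $\langle a\rangle$ is the ideal generated by $a$. *)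

(* Defs.v *)
From HB Require Import structures.
From mathcomp Require Import all_boot all_order all_algebra.
From mathcomp Require Import monoid.
Set Implicit Arguments. Unset Strict Implicit. Unset Printing Implicit Defensive.
Import GRing.Theory.
Local Open Scope ring_scope.

Definition submodule (R : pzRingType) (M : lmodType R) (U : M -> Prop) : Prop :=
  [/\ U 0, (forall x y, U x -> U y -> U (x + y)) &
      (forall (r : R) x, U x -> U (r *: x))].

Definition span (R : pzRingType) (M : lmodType R) (S : M -> Prop) : M -> Prop :=
  fun x => forall L : M -> Prop, submodule L -> (forall y, S y -> L y) -> L x.

(** Ideals of a commutative ring R = submodules of R over itself. *)
Definition pideal (R : comPzRingType) (a : R) : R^o -> Prop :=
  span (fun x : R^o => x = a).

Definition ideal_mul (R : comPzRingType) (I J : R^o -> Prop) : R^o -> Prop :=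
  span (fun x : R^o => exists a b, [/\ I a, J b & x = a * b]).

Fixpoint ideal_pow (R : comPzRingType) (I : R^o -> Prop) (n : nat) : R^o -> Prop :=
  match n with
  | 0%N => fun _ => True
  | n'.+1 => ideal_mul (ideal_pow I n') I
  end.

Definition ideal_smul (R : comPzRingType) (M : lmodType R)
  (I : R^o -> Prop) (K : M -> Prop) : M -> Prop :=
  span (fun x : M => exists a k, [/\ I a, K k & x = a *: k]).

Definition subsum (R : pzRingType) (M : lmodType R) (U V : M -> Prop) : M -> Prop :=
  fun x => exists u v, [/\ U u, V v & x = u + v].

Definition internal_direct_sum (G : eqType) (V : zmodType) (VG : G -> V -> Prop) : Prop :=
  [/\ (forall g, VG g 0 /\ forall x y, VG g x -> VG g y -> VG g (x - y)),
      (forall x : V, exists (s : seq G) (f : G -> V),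
          [/\ uniq s, (forall g, g \in s -> VG g (f g)) & x = \sum_(g <- s) f g]) &
      (forall (s : seq G) (f : G -> V), uniq s -> (forall g, g \in s -> VG g (f g)) ->
          \sum_(g <- s) f g = 0 -> forall g, g \in s -> f g = 0)].

Definition graded_ring (G : groupType) (R : comPzRingType) (RG : G -> R -> Prop) : Prop :=
  internal_direct_sum RG /\
  (forall g h (a b : R), RG g a -> RG h b -> RG (g * h)%g (a * b)).

Definition graded_module (G : groupType) (R : comPzRingType) (M : lmodType R)
  (RG : G -> R -> Prop) (MG : G -> M -> Prop) : Prop :=
  internal_direct_sum MG /\
  (forall g h (a : R) (m : M), RG g a -> MG h m -> MG (g * h)%g (a *: m)).

Definition homogeneous (G : Type) (V : Type) (VG : G -> V -> Prop) (x : V) : Prop :=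
  exists g, VG g x.

(** Graded submodule: U is a submodule and U = (+)_g (U /\ M_g), i.e. every
    element of U is a finite sum of homogeneous elements of U of distinct degrees. *)
Definition graded_submodule (G : groupType) (R : comPzRingType) (M : lmodType R)
  (MG : G -> M -> Prop) (U : M -> Prop) : Prop :=
  submodule U /\
  forall u, U u -> exists (s : seq G) (f : G -> M),
    [/\ uniq s, (forall g, g \in s -> MG g (f g) /\ U (f g)) & u = \sum_(g <- s) f g].

Definition proper_submod (M : Type) (U : M -> Prop) : Prop := exists x, ~ U x.

Definition gr_maximal (G : groupType) (R : comPzRingType) (M : lmodType R)
  (MG : G -> M -> Prop) (U : M -> Prop) : Prop :=
  [/\ graded_submodule MG U, proper_submod U &
      forall L, graded_submodule MG L -> (forall x, U x -> L x) ->
        (forall x, L x <-> U x) \/ (forall x, L x)].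

(** J_gr(M): intersection of all Gr-maximal submodules (= M if there are none). *)
Definition Jgr (G : groupType) (R : comPzRingType) (M : lmodType R)
  (MG : G -> M -> Prop) : M -> Prop :=
  fun x => forall L, gr_maximal MG L -> L x.

Definition gr_weakly_Jgr_semiprime (G : groupType) (R : comPzRingType) (M : lmodType R)
  (RG : G -> R -> Prop) (MG : G -> M -> Prop) (U : M -> Prop) : Prop :=
  [/\ graded_submodule MG U, proper_submod U &
      forall (r : R) (m : M) (n : nat), homogeneous RG r -> homogeneous MG m ->
        (0 < n)%N -> r ^+ n *: m != 0 -> U (r ^+ n *: m) ->
        subsum U (Jgr MG) (r *: m)].

(* Main.v *)
Require Import Defs.
From HB Require Import structures.
From mathcomp Require Import all_boot all_order all_algebra.
From mathcomp Require Import monoid.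
From Stdlib Require Import Classical.
Set Implicit Arguments. Unset Strict Implicit. Unset Printing Implicit Defensive.
Import GRing.Theory.
Local Open Scope ring_scope.

Section Aux.
Variables (R : comPzRingType) (M : lmodType R).

Lemma sm_add (U : M -> Prop) x y : submodule U -> U x -> U y -> U (x + y).
Proof. by case=> _ H _; apply: H. Qed.
Lemma sm_scale (U : M -> Prop) c x : submodule U -> U x -> U (c *: x).
Proof. by case=> _ _ H; apply: H. Qed.
Lemma sm0 (U : M -> Prop) : submodule U -> U 0.
Proof. by case. Qed.
Lemma sm_sum (U : M -> Prop) (I : eqType) (s : seq I) (F : I -> M) :
  submodule U -> (forall i, i \in s -> U (F i)) -> U (\sum_(i <- s) F i).
Proof.
move=> HU; elim: s => [|i s IH] H; first by rewrite big_nil; apply: sm0.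
rewrite big_cons; apply: sm_add => //; first by apply: H; rewrite mem_head.
by apply: IH => j Hj; apply: H; rewrite inE Hj orbT.
Qed.

Lemma span_ind (S L : M -> Prop) x : Defs.span S x -> submodule L ->
  (forall y, S y -> L y) -> L x.
Proof. by move=> H HL HS; apply: H. Qed.
Lemma span_gen (S : M -> Prop) x : S x -> Defs.span S x.
Proof. by move=> Sx L _ H; apply: H. Qed.

Lemma subsum_sm (U V : M -> Prop) : submodule U -> submodule V ->
  submodule (subsum U V).
Proof.
move=> HU HV; split.
- by exists 0, 0; split; rewrite ?addr0 //; apply: sm0.
- move=> x y [u1 [v1 [H1 H2 ->]]] [u2 [v2 [H3 H4 ->]]].
  exists (u1 + u2), (v1 + v2); split; first exact: sm_add.
  + exact: sm_add.
  + by rewrite addrACA.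
- move=> c x [u [v [H1 H2 ->]]]; exists (c *: u), (c *: v); split.
  + exact: sm_scale. + exact: sm_scale. + by rewrite scalerDr.
Qed.
End Aux.
Section Graded.
Variables (G : groupType) (R : comPzRingType) (M : lmodType R)
  (RG : G -> R -> Prop) (MG : G -> M -> Prop)
  (HR : graded_ring RG) (HM : graded_module RG MG).

Lemma MG_add g x y : MG g x -> MG g y -> MG g (x + y).
Proof.
move=> Hx Hy; case: HM => [[H1 _ _] _]; case: (H1 g) => H0 Hs.
have -> : x + y = x - (0 - y) by rewrite sub0r opprK.
by apply: (Hs) => //; apply: (Hs).
Qed.

Lemma MG_sum g (I : eqType) (s : seq I) (F : I -> M) :
  (forall i, i \in s -> MG g (F i)) -> MG g (\sum_(i <- s) F i).
Proof.
elim: s => [|i s IH] H.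
  by rewrite big_nil; case: HM => [[H1 _ _] _]; case: (H1 g).
rewrite big_cons; apply: MG_add; first by apply: H; rewrite mem_head.
by apply: IH => j Hj; apply: H; rewrite inE Hj orbT.
Qed.

Lemma sum_partition (l : seq (G * M)) :
  \sum_(g <- undup (map fst l)) \sum_(p <- l | p.1 == g) p.2 = \sum_(p <- l) p.2.
Proof.
rewrite (exchange_big_dep predT) //=.
rewrite big_seq [RHS]big_seq; apply: eq_bigr => p pl.
rewrite big_mkcond (bigD1_seq p.1) ?undup_uniq ?mem_undup ?map_f //= eqxx.
rewrite big1 ?addr0 // => i; rewrite eq_sym => /negbTE ->; done.
Qed.

Lemma graded_of_list (U : M -> Prop) : submodule U ->
  (forall u, U u -> exists l : seq (G * M), u = \sum_(p <- l) p.2 /\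
      forall p, p \in l -> MG p.1 p.2 /\ U p.2) -> graded_submodule MG U.
Proof.
move=> HU H; split => // u /H [l [-> Hl]].
exists (undup (map fst l)), (fun g => \sum_(p <- l | p.1 == g) p.2); split.
- exact: undup_uniq.
- move=> g _; rewrite -big_filter; split.
  + apply: MG_sum => p; rewrite mem_filter => /andP [/eqP <- /Hl []] //.
  + apply: sm_sum => // p; rewrite mem_filter => /andP [_ /Hl []] //.
- by rewrite sum_partition.
Qed.

Lemma RG_dec (c : R) : exists (s : seq G) (f : G -> R),
  (forall g, g \in s -> RG g (f g)) /\ c = \sum_(g <- s) f g.
Proof.
case: HR => [[_ H _] _]; have [s [f [_ Hf ->]]] := H c.
by exists s, f.
Qed.

Lemma cyc_graded (L : M -> Prop) x h : graded_submodule MG L -> MG h x ->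
  graded_submodule MG (fun y => exists l c, L l /\ y = l + c *: x).
Proof.
move=> [HL HLg] Hx; apply: graded_of_list.
  split.
  - by exists 0, 0; rewrite scale0r addr0; split => //; apply: sm0.
  - move=> y z [l1 [c1 [H1 ->]]] [l2 [c2 [H2 ->]]].
    exists (l1 + l2), (c1 + c2); split; first exact: sm_add.
    by rewrite scalerDl addrACA.
  - move=> r y [l [c [H1 ->]]]; exists (r *: l), (r * c); split.
    + exact: sm_scale. + by rewrite scalerDr scalerA.
move=> y [l [c [Hl ->]]].
have [s1 [f1 [_ Hf1 El]]] := HLg l Hl.
have [s2 [f2 [Hf2 Ec]]] := RG_dec c.
exists (map (fun g => (g, f1 g)) s1 ++ map (fun g => ((g * h)%g, f2 g *: x)) s2).
split.
  by rewrite big_cat !big_map /= -El Ec scaler_suml.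
move=> p; rewrite mem_cat => /orP [] /mapP [g Hg ->] /=.
- have [H1 H2] := Hf1 g Hg; split => //.
  by exists (f1 g), 0; rewrite scale0r addr0.
- split; first by case: HM => _ Hm; apply: Hm => //; apply: Hf2.
  by exists 0, (f2 g); rewrite add0r; split => //; apply: sm0.
Qed.

Lemma Jgr_sm : submodule (Jgr MG).
Proof.
split.
- by move=> L [[HL _] _ _]; apply: sm0.
- by move=> x y Hx Hy L HLm; have [[HL _] _ _] := HLm; apply: sm_add; [exact: HL|apply: Hx|apply: Hy].
- by move=> c x Hx L HLm; have [[HL _] _ _] := HLm; apply: sm_scale; [exact: HL|apply: Hx].
Qed.

Lemma Jgr_key (r : R) (m : M) g h n : RG g r -> MG h m -> r ^+ n *: m = 0 ->
  Jgr MG (r *: m).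
Proof.
move=> Hr Hm Hz L [Lgr Lp Lmax]; apply: NNPP => Hn.
have Hx : MG (g * h)%g (r *: m) by case: HM => _ H; apply: H.
have HLs := (proj1 Lgr).
have [Heq|Hall] := Lmax _ (cyc_graded Lgr Hx)
  (fun y Ly => ex_intro _ y (ex_intro _ 0 (conj Ly (esym (etrans (congr1 _ (scale0r _)) (addr0 _)))))).
  apply: Hn; apply/Heq; exists 0, 1; rewrite scale1r add0r; split => //; exact: sm0.
have [l0 [s [Hl0 Hm0]]] := Hall m.
have key : forall k, exists l c, L l /\ m = l + c *: (r ^+ k *: m).
  elim=> [|k [l [c [Hl E]]]].
    by exists 0, 1; rewrite scale1r expr0 scale1r add0r; split => //; apply: sm0.
  exists (l + (c * r ^+ k) *: l0), (c * s); split.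
    by apply: sm_add => //; apply: sm_scale.
  rewrite {1}E {1}Hm0 !scalerDr !scalerA addrA; congr (_ + _ + _).
  by rewrite exprSr; congr (_ *: _); rewrite -!mulrA; congr (_ * _); rewrite mulrCA.
have [l [c [Hl E]]] := key n.
by apply: Hn; apply: sm_scale => //; rewrite E Hz scaler0 addr0.
Qed.
End Graded.
Section Ideals.
Variable R : comPzRingType.

Lemma pideal_mem (r : R) : pideal r r.
Proof. exact: span_gen. Qed.

Lemma pideal_ex (r a : R) : pideal r a -> exists c, a = c * r.
Proof.
move=> H; apply: (span_ind (L := fun a : R^o => exists c, a = c * r) H).
- split.
  + by exists 0; rewrite mul0r.
  + by move=> x y [c1 ->] [c2 ->]; exists (c1 + c2); rewrite mulrDl.
  + by move=> d x [c ->]; exists (d * c); exact: mulrA.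
- by move=> y ->; exists 1; rewrite mul1r.
Qed.

Lemma pow_mem (r : R) n : ideal_pow (pideal r) n (r ^+ n).
Proof.
elim: n => [|n IH] //=; apply: span_gen; exists (r ^+ n), r; split => //.
- exact: pideal_mem.
- by rewrite exprSr.
Qed.

Lemma pow_ex (r : R) n a : ideal_pow (pideal r) n a -> exists c, a = c * r ^+ n.
Proof.
elim: n a => [|n IH] a /= H; first by exists a; rewrite mulr1.
apply: (span_ind (L := fun a : R^o => exists c, a = c * r ^+ n.+1) H).
- split.
  + by exists 0; rewrite mul0r.
  + by move=> x y [c1 ->] [c2 ->]; exists (c1 + c2); rewrite mulrDl.
  + by move=> d x [c ->]; exists (d * c); exact: mulrA.
- move=> y [x [b [/IH [c ->] /pideal_ex [d ->] ->]]].
  by exists (c * d); rewrite exprSr mulrACA.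
Qed.

Lemma smul_gen (M : lmodType R) (I : R^o -> Prop) (K : M -> Prop) a k :
  I a -> K k -> ideal_smul I K (a *: k).
Proof. by move=> Ia Kk; apply: span_gen; exists a, k. Qed.
End Ideals.

Theorem theorem2p4 (G : groupType) (R : comPzRingType) (M : lmodType R)
  (RG : G -> R -> Prop) (MG : G -> M -> Prop)
  (HR : graded_ring RG) (HM : graded_module RG MG)
  (U : M -> Prop) (HU : graded_submodule MG U) (HUp : proper_submod U) :
  gr_weakly_Jgr_semiprime RG MG U <->
  (forall (K : M -> Prop) (r : R) (n : nat),
     graded_submodule MG K -> homogeneous RG r -> (0 < n)%N ->
     ~ (forall x, ideal_smul (ideal_pow (pideal r) n) K x <-> x = 0) ->
     (forall x, ideal_smul (ideal_pow (pideal r) n) K x -> U x) ->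
     (forall x, ideal_smul (pideal r) K x -> subsum U (Jgr MG) x)).
Proof.
have HUs := proj1 HU.
split.
- move=> [_ _ Hsp] K r n HK Hr Hn _ Hsub x Hx.
  apply: (span_ind Hx); first exact: subsum_sm (Jgr_sm MG).
  move=> y [a [k [/pideal_ex [c ->] Kk ->]]].
  rewrite -scalerA; apply: sm_scale; first exact: subsum_sm (Jgr_sm MG).
  have [s [f [_ Hf ->]]] := (proj2 HK) k Kk.
  rewrite scaler_sumr; apply: sm_sum; first exact: subsum_sm (Jgr_sm MG).
  move=> g gs; have [Hfg Kfg] := Hf g gs.
  have [z0|nz] := eqVneq (r ^+ n *: f g) 0.
    case: Hr => g' Hr.
    exists 0, (r *: f g); split; [exact: sm0|exact: (Jgr_key HR HM Hr Hfg z0)|by rewrite add0r].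
  apply: (Hsp r (f g) n) => //; first by exists g.
  by apply: Hsub; apply: smul_gen => //; apply: pow_mem.
- move=> H; split => // r m n Hr [h Hm] Hn Hnz HUm.
  have Z : graded_submodule MG (fun y : M => y = 0).
    split.
    + split => //; first by move=> x y -> ->; rewrite addr0.
      by move=> c x ->; rewrite scaler0.
    + by move=> u ->; exists [::], (fun _ => 0); rewrite big_nil.
  have HK := cyc_graded HR HM Z Hm.
  have Km : (exists l c, l = 0 /\ m = l + c *: m) by exists 0, 1; rewrite scale1r add0r.
  apply: (H _ r n HK Hr Hn).
  + move=> H'; move: Hnz; rewrite (_ : r ^+ n *: m = 0) ?eqxx //.
    by apply/H'; apply: smul_gen => //; apply: pow_mem.
  + move=> x Hx; apply: (span_ind Hx HUs).
    move=> y [a [k [/pow_ex [c ->] [l [d [-> ->]]] ->]]].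
    rewrite add0r scalerA -mulrA [_ * d]mulrC mulrA -scalerA.
    exact: sm_scale.
  + apply: smul_gen => //; exact: pideal_mem.
Qed.
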